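(* Let $\mathcal A$ be a finite non-associative algebra. Then $\mathcal A$ has a feeble representation if and only if there is a consistent atomic network $(N,\lambda)$ over $\mathcal A$ such that for every atom $a$ of $\mathcal A$ there are $x,y\in N$ with $\lambda(x,y)=a$.
   Context: A non-associative algebra is an algebra $(A,0,1,+,-,1',\breve{\ },;)$ such that $(A,0,1,+,-)$ is a boolean algebra (with $x\cdot y=-(-x+-y)$, $x\le y\iff x+y=y$); $1';x=x=x;1'$, $\breve{\breve x}=x$, $(x;y)\breve{}=\breve y;\breve x$; $\breve 0=x;0=0$, $(x+y)\breve{}=\breve x+\breve y$, $x;(y+z)=x;y+x;z$; and the Peircean law: $x;y\cdot\breve z=0$ iff $y;z\cdot\breve x=0$. An atom is a minimal nonzero element. A feeble representation of $\mathcal A$ over base $D$ is an injective map $\phi:A\to\wp(D\times D)$ such that $0^\phi=\varnothing$, $1^\phi=D\times D$, $(1')^\phi=\{(x,x):x\in D\}$, $(a+b)^\phi=a^\phi\cup b^\phi$, $(-a)^\phi=(D\times D)\setminus a^\phi$, $(\breve a)^\phi=\{(y,x):(x,y)\in a^\phi\}$, and $(a;b)^\phi\supseteq a^\phi\circ b^\phi$ for all $a,b\in A$ (where $\circ$ is relational composition). A network over $\mathcal A$ is a pair $(N,\lambda)$ with $N$ a finite set and $\lambda:N\times N\to A$; it is consistent if for all $x,y,z\in N$: $\lambda(x,x)\le 1'$; $\lambda(x,y);\lambda(y,z)\cdot\lambda(x,z)\ne 0$; $\lambda(x,y)\cdot\lambda(y,x)\breve{}\ne0$; $\lambda(x,y)\ne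 0$. It is atomic if every $\lambda(x,y)$ is an atom. *)

(* Defs.v *)
From mathcomp Require Import all_boot.
Set Implicit Arguments. Unset Strict Implicit. Unset Printing Implicit Defensive.

Record naa (T : Type) : Type := NAA {
  zero : T; one : T; plus : T -> T -> T; neg : T -> T;
  ident : T; conv : T -> T; comp : T -> T -> T;
  (* (A,0,1,+,-) is a boolean algebra, with x.y := -(-x + -y) *)
  plusA : forall x y z, plus x (plus y z) = plus (plus x y) z;
  plusC : forall x y, plus x y = plus y x;
  multA : forall x y z,
    neg (plus (neg x) (neg (neg (plus (neg y) (neg z)))))
    = neg (plus (neg (neg (plus (neg x) (neg y)))) (neg z));
  multC : forall x y, neg (plus (neg x) (neg y)) = neg (plus (neg y) (neg x));
  absorb1 : forall x y, plus x (neg (plus (neg x) (neg y))) = x;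
  absorb2 : forall x y, neg (plus (neg x) (neg (plus x y))) = x;
  distr : forall x y z,
    neg (plus (neg x) (neg (plus y z)))
    = plus (neg (plus (neg x) (neg y))) (neg (plus (neg x) (neg z)));
  plus0 : forall x, plus x zero = x;
  mult1 : forall x, neg (plus (neg x) (neg one)) = x;
  complP : forall x, plus x (neg x) = one;
  complM : forall x, neg (plus (neg x) (neg (neg x))) = zero;
  ident_l : forall x, comp ident x = x;
  ident_r : forall x, comp x ident = x;
  conv_inv : forall x, conv (conv x) = x;
  conv_comp : forall x y, conv (comp x y) = comp (conv y) (conv x);
  conv0 : conv zero = zero;
  comp0 : forall x, comp x zero = zero;
  conv_plus : forall x y, conv (plus x y) = plus (conv x) (conv y);
  comp_plus : forall x y z, comp x (plus y z) = plus (comp x y) (comp x z);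
  peirce : forall x y z,
    neg (plus (neg (comp x y)) (neg (conv z))) = zero <->
    neg (plus (neg (comp y z)) (neg (conv x))) = zero
}.

Section Defs.
Variables (T : Type) (A : naa T).

Definition meet (x y : T) : T := neg A (plus A (neg A x) (neg A y)).
Definition leA (x y : T) : Prop := plus A x y = y.

Definition is_atom (a : T) : Prop :=
  a <> zero A /\ forall b, leA b a -> b <> zero A -> b = a.

Definition rel_eq {D : Type} (r s : D -> D -> Prop) : Prop :=
  forall u v, r u v <-> s u v.

Definition feeble_rep (D : Type) (phi : T -> D -> D -> Prop) : Prop :=
  (forall a b, rel_eq (phi a) (phi b) -> a = b) /\
  rel_eq (phi (zero A)) (fun _ _ => False) /\
  rel_eq (phi (one A)) (fun _ _ => True) /\
  rel_eq (phi (ident A)) (fun u v => u = v) /\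
  (forall a b, rel_eq (phi (plus A a b)) (fun u v => phi a u v \/ phi b u v)) /\
  (forall a, rel_eq (phi (neg A a)) (fun u v => ~ phi a u v)) /\
  (forall a, rel_eq (phi (conv A a)) (fun u v => phi a v u)) /\
  (forall a b u v, (exists w, phi a u w /\ phi b w v) -> phi (comp A a b) u v).

Definition has_feeble_rep : Prop :=
  exists (D : Type) (phi : T -> D -> D -> Prop), feeble_rep phi.

Definition consistent_network (N : finType) (lam : N -> N -> T) : Prop :=
  forall x y z : N,
    leA (lam x x) (ident A) /\
    meet (comp A (lam x y) (lam y z)) (lam x z) <> zero A /\
    meet (lam x y) (conv A (lam y x)) <> zero A /\
    lam x y <> zero A.

Definition atomic_network (N : finType) (lam : N -> N -> T) : Prop :=
  forall x y : N, is_atom (lam x y).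

End Defs.

(* Main.v *)
Require Import Defs.
From mathcomp Require Import all_boot.
From Stdlib Require Import Classical ClassicalEpsilon.

Set Implicit Arguments. Unset Strict Implicit.

Section BA.
Variables (T : finType) (A : naa T).
Local Notation pl := (Defs.plus A).
Local Notation ng := (Defs.neg A).
Local Notation mt := (meet A).
Local Notation le := (leA A).
Local Notation z0 := (Defs.zero A).
Local Notation o1 := (Defs.one A).

Lemma plA x y z : pl x (pl y z) = pl (pl x y) z. Proof. exact: plusA. Qed.
Lemma plC x y : pl x y = pl y x. Proof. exact: plusC. Qed.
Lemma mtA x y z : mt x (mt y z) = mt (mt x y) z. Proof. exact: multA. Qed.
Lemma mtC x y : mt x y = mt y x. Proof. exact: multC. Qed.
Lemma abs1 x y : pl x (mt x y) = x. Proof. exact: absorb1. Qed.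
Lemma abs2 x y : mt x (pl x y) = x. Proof. exact: absorb2. Qed.
Lemma dst x y z : mt x (pl y z) = pl (mt x y) (mt x z). Proof. exact: distr. Qed.
Lemma pl0 x : pl x z0 = x. Proof. exact: plus0. Qed.
Lemma mt1 x : mt x o1 = x. Proof. exact: mult1. Qed.
Lemma cmpP x : pl x (ng x) = o1. Proof. exact: complP. Qed.
Lemma cmpM x : mt x (ng x) = z0. Proof. exact: complM. Qed.

Lemma plxx x : pl x x = x. Proof. by rewrite -{2}(abs2 x z0) abs1. Qed.
Lemma mtxx x : mt x x = x. Proof. by rewrite -{2}(abs1 x x) abs2. Qed.
Lemma leP x y : le x y <-> mt x y = x.
Proof.
split=> h; first by rewrite -h abs2.
by rewrite /leA -h plC mtC abs1.
Qed.
Lemma mt0 x : mt x z0 = z0. Proof. by rewrite -(cmpM x) mtA mtxx. Qed.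
Lemma pl1 x : pl x o1 = o1. Proof. by rewrite -(cmpP x) plA plxx. Qed.
Lemma pl0l x : pl z0 x = x. Proof. by rewrite plC pl0. Qed.

Lemma compl_uniq x y : pl x y = o1 -> mt x y = z0 -> y = ng x.
Proof.
move=> h1 h2.
have e1 : y = mt y (ng x) by rewrite -{1}(mt1 y) -(cmpP x) dst (mtC y x) h2 pl0l.
have e2 : ng x = mt (ng x) y by rewrite -{1}(mt1 (ng x)) -h1 dst (mtC (ng x) x) cmpM pl0l.
rewrite e1 (mtC y (ng x)); exact: esym e2.
Qed.
Lemma ngK x : ng (ng x) = x.
Proof. symmetry; apply: compl_uniq; [by rewrite plC cmpP | by rewrite mtC cmpM]. Qed.

Lemma le_refl x : le x x. Proof. exact: plxx. Qed.
Lemma le_trans x y z : le x y -> le y z -> le x z.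
Proof. by move=> h1 h2; rewrite /leA -h2 plA h1. Qed.
Lemma le_anti x y : le x y -> le y x -> x = y.
Proof. by move=> h1 h2; rewrite -h2 plC h1. Qed.
Lemma le_mtl x y : le (mt x y) x. Proof. by rewrite /leA plC abs1. Qed.
Lemma le_mtr x y : le (mt x y) y. Proof. by rewrite mtC; apply: le_mtl. Qed.
Lemma le_mt x y z : le z x -> le z y -> le z (mt x y).
Proof. by move=> /leP h1 /leP h2; apply/leP; rewrite mtA h1 h2. Qed.
Lemma le_pll x y : le x (pl x y). Proof. by rewrite /leA plA plxx. Qed.
Lemma le_plr x y : le y (pl x y). Proof. by rewrite plC; apply: le_pll. Qed.
Lemma le_zero x : le x z0 -> x = z0. Proof. by rewrite /leA pl0. Qed.
Lemma le_one x : le x o1. Proof. exact: pl1. Qed.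
Lemma le_mt_mono c c' d : le c c' -> le (mt c d) (mt c' d).
Proof. move=> h; apply: le_mt; [apply: le_trans h; apply: le_mtl| apply: le_mtr]. Qed.

Lemma atom_mt c a : is_atom A c -> le c a \/ mt c a = z0.
Proof.
move=> [nz hc]; case: (classic (mt c a = z0)) => h; first by right.
left; apply/leP; apply: hc => //; exact: le_mtl.
Qed.

Lemma atom_ng c a : is_atom A c -> (le c (ng a) <-> ~ le c a).
Proof.
move=> hc; split.
  move=> h1 h2; case: hc => nz _; apply: nz; apply: le_zero.
  by rewrite -(cmpM a); apply: le_mt.
move=> h; case: (atom_mt a hc) => // h'; apply/leP.
by rewrite -{2}(mt1 c) -(cmpP a) dst h' pl0l.
Qed.

Lemma atom_pl c a b : is_atom A c -> (le c (pl a b) <-> le c a \/ le c b).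
Proof.
move=> hc; split; last first.
  by case=> h; [apply: le_trans h (le_pll _ _)| apply: le_trans h (le_plr _ _)].
move=> /leP h.
case: (atom_mt a hc) => [|ha]; first by left.
case: (atom_mt b hc) => [|hb]; first by right.
case: hc => nz _; exfalso; apply: nz; by rewrite -h dst ha hb pl0.
Qed.

Lemma atom_eq c d : is_atom A c -> is_atom A d -> mt c d <> z0 -> c = d.
Proof.
move=> hc hd h; apply: le_anti.
  by case: (atom_mt d hc).
by case: (atom_mt c hd) => // e; rewrite mtC in e.
Qed.

Lemma conv_mono a b : le a b -> le (conv A a) (conv A b).
Proof. by move=> h; rewrite /leA -conv_plus h. Qed.
Lemma conv_le a b : le (conv A a) (conv A b) <-> le a b.
Proof.
split; last exact: conv_mono.
by move=> /conv_mono; rewrite !conv_inv.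
Qed.
Lemma conv_atom c : is_atom A c -> is_atom A (conv A c).
Proof.
move=> [nz hc]; split.
  by move=> e; apply: nz; rewrite -(conv_inv A c) e conv0.
move=> b hb nb; rewrite -(conv_inv A b); congr (conv A _); apply: hc.
  by have := conv_mono hb; rewrite conv_inv.
by move=> e; apply: nb; rewrite -(conv_inv A b) e conv0.
Qed.
Lemma comp_monor c a b : le a b -> le (Defs.comp A c a) (Defs.comp A c b).
Proof. by move=> h; rewrite /leA -comp_plus h. Qed.
Lemma comp_monol c a b : le a b -> le (Defs.comp A a c) (Defs.comp A b c).
Proof.
move=> h; rewrite -(conv_inv A (Defs.comp A a c)) -(conv_inv A (Defs.comp A b c)).
apply: conv_mono; rewrite !conv_comp; apply: comp_monor; exact: conv_mono.
Qed.

Lemma atom_below_n n x : #|[pred z | pl z x == x]| <= n -> x <> z0 ->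
  exists c, is_atom A c /\ le c x.
Proof.
elim: n x => [|n IH] x hn nx.
  have hx : x \in [pred z | pl z x == x] by rewrite inE; apply/eqP; apply: le_refl.
  have : 0 < #|[pred z | pl z x == x]| by apply/card_gt0P; exists x.
  by rewrite ltnNge hn.
case: (classic (is_atom A x)) => hx; first by exists x; split=> //; apply: le_refl.
have [b [hb [nb bx]]] : exists b, le b x /\ b <> z0 /\ b <> x.
  apply: NNPP => H; apply: hx; split=> // b hb nb; apply: NNPP => bx; apply: H.
  by exists b.
have [c [hc cb]] : exists c, is_atom A c /\ le c b.
  apply: (IH b) => //.
  have : [pred z | pl z b == b] \proper [pred z | pl z x == x].
    apply/properP; split.
      apply/subsetP=> z; rewrite !inE => /eqP h; apply/eqP; exact: le_trans h hb.
    exists x; first by rewrite inE; apply/eqP; apply: le_refl.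
    rewrite inE; apply/negP => /eqP h; apply: bx; exact: le_anti hb h.
  move/proper_card => h; rewrite -ltnS; exact: leq_trans h hn.
by exists c; split=> //; apply: le_trans cb hb.
Qed.

Lemma atom_below x : x <> z0 -> exists c, is_atom A c /\ le c x.
Proof. exact: (@atom_below_n #|T|) (max_card _). Qed.

Lemma le_of_atoms a b : (forall c, is_atom A c -> le c a -> le c b) -> le a b.
Proof.
move=> H; case: (classic (mt a (ng b) = z0)) => h.
  apply/leP; by rewrite -{2}(mt1 a) -(cmpP b) dst h pl0.
case: (atom_below h) => c [hc cab]; exfalso.
have ca : le c a by apply: le_trans cab (le_mtl _ _).
have cb : le c (ng b) by apply: le_trans cab (le_mtr _ _).
by move/(atom_ng b hc): cb; apply; apply: H.
Qed.

End BA.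

Section Back.
Variables (T : finType) (A : naa T) (N : finType) (lam : N -> N -> T).
Hypothesis Hc : consistent_network A lam.
Hypothesis Ha : atomic_network A lam.
Local Notation pl := (Defs.plus A).
Local Notation ng := (Defs.neg A).
Local Notation mt := (meet A).
Local Notation le := (leA A).
Local Notation z0 := (Defs.zero A).
Local Notation o1 := (Defs.one A).
Local Notation id1 := (ident A).

Lemma resp1 x y z : le (lam x y) id1 -> lam x z = lam y z.
Proof.
move=> h; have [_ [h1 _]] := Hc x y z.
symmetry; apply: atom_eq (Ha _ _) (Ha _ _) _ => e; apply: h1; apply: le_zero.
rewrite -e; apply: le_mt_mono; rewrite -{2}(ident_l A (lam y z)).
exact: comp_monol.
Qed.

Lemma resp2 x y z : le (lam x y) id1 -> lam z x = lam z y.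
Proof.
move=> h; have [_ [h1 _]] := Hc z x y.
apply: atom_eq (Ha _ _) (Ha _ _) _ => e; apply: h1; apply: le_zero.
rewrite -e; apply: le_mt_mono; rewrite -{2}(ident_r A (lam z x)).
exact: comp_monor.
Qed.

Definition Eb x y := pl (lam x y) id1 == id1.
Lemma EbP x y : reflect (le (lam x y) id1) (Eb x y).
Proof. exact: eqP. Qed.
Lemma Eb_refl x : Eb x x. Proof. by apply/EbP; case: (Hc x x x). Qed.
Lemma Eb_sym x y : Eb x y -> Eb y x.
Proof. by move/EbP=> h; apply/EbP; rewrite (resp2 y h); apply/EbP/Eb_refl. Qed.
Lemma Eb_trans x y z : Eb x y -> Eb y z -> Eb x z.
Proof. by move/EbP=> h /EbP h2; apply/EbP; rewrite (resp1 z h). Qed.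

Definition r x := odflt x [pick y | Eb x y].
Lemma r_spec x : Eb x (r x).
Proof. rewrite /r; case: pickP => [y hy|h] //=; exact: Eb_refl. Qed.
Lemma r_eq x y : Eb x y -> r x = r y.
Proof.
move=> h; rewrite /r.
have -> : [pick z | Eb x z] = [pick z | Eb y z].
  apply: eq_pick => z; apply/idP/idP => hz.
    exact: Eb_trans (Eb_sym h) hz.
  exact: Eb_trans h hz.
by case: pickP => // /(_ y); rewrite Eb_refl.
Qed.
Lemma rr x : r (r x) = r x.
Proof. by symmetry; apply: r_eq; apply: r_spec. Qed.
Lemma lam_r x y : lam (r x) (r y) = lam x y.
Proof.
rewrite -(resp1 (r y) (elimT (EbP _ _) (r_spec x))).
by rewrite -(resp2 x (elimT (EbP _ _) (r_spec y))).
Qed.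

Definition DD := {x : N | r x == x}.
Definition phiN (a : T) (u v : DD) : Prop := le (lam (val u) (val v)) a.

Lemma lam_conv x y : lam x y = conv A (lam y x).
Proof.
have [_ [_ [h _]]] := Hc x y x.
exact: atom_eq (Ha _ _) (conv_atom (Ha _ _)) h.
Qed.

Hypothesis Hcov : forall a : T, is_atom A a -> exists x y : N, lam x y = a.

Lemma back_rep : feeble_rep A phiN.
Proof.
split.
  move=> a b H.
  have key : forall a b, rel_eq (phiN a) (phiN b) -> le a b.
    move=> a' b' H'; apply: le_of_atoms => c hc ca.
    have [x [y e]] := Hcov hc.
    have ux : r (r x) == r x by rewrite rr.
    have uy : r (r y) == r y by rewrite rr.
    have := (H' (exist _ (r x) ux) (exist _ (r y) uy)).1.
    by rewrite /phiN /= lam_r e; apply.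
  apply: le_anti; apply: key => // u v; split; apply H.
split.
  move=> u v; split=> // h; case: (Ha (val u) (val v)) => nz _; apply: nz.
  exact: le_zero.
split.
  by move=> u v; split=> // _; apply: le_one.
split.
  move=> u v; split=> [/EbP h|->]; last by case: (Hc (val v) (val v) (val v)).
  apply: val_inj; have := r_eq h; rewrite (eqP (valP u)) (eqP (valP v)) //.
split.
  move=> a b u v; exact: atom_pl (Ha _ _).
split.
  move=> a u v; exact: atom_ng (Ha _ _).
split.
  move=> a u v; rewrite /phiN lam_conv; exact: conv_le.
move=> a b u v [w [h1 h2]]; rewrite /phiN.
have [_ [h _]] := Hc (val u) (val w) (val v).
case: (atom_mt (Defs.comp A (lam (val u) (val w)) (lam (val w) (val v))) (Ha (val u) (val v))) => [c|e].
  apply: le_trans c _; apply: le_trans (comp_monol _ h1) _; exact: comp_monor.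
by exfalso; apply: h; rewrite mtC.
Qed.

End Back.

Section Fwd.
Variables (T : finType) (A : naa T) (D : Type) (phi : T -> D -> D -> Prop).
Hypothesis Hp : feeble_rep A phi.
Local Notation pl := (Defs.plus A).
Local Notation ng := (Defs.neg A).
Local Notation mt := (meet A).
Local Notation le := (leA A).
Local Notation z0 := (Defs.zero A).
Local Notation o1 := (Defs.one A).
Local Notation id1 := (ident A).

Lemma phi_mt a b u v : phi (mt a b) u v <-> phi a u v /\ phi b u v.
Proof.
case: Hp => _ [_ [_ [_ [Hpl [Hng _]]]]].
rewrite /meet Hng Hpl !Hng.
case: (classic (phi a u v)); case: (classic (phi b u v)); tauto.
Qed.

Lemma phi_nz a u v : phi a u v -> a <> z0.
Proof. by case: Hp => _ [H0 _] h e; rewrite e in h; apply/(H0 u v). Qed.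

Lemma atom_common c b u v : is_atom A c -> phi c u v -> phi b u v -> le c b.
Proof.
move=> hc h1 h2; case: (atom_mt b hc) => // e; exfalso.
by apply: (phi_nz (u:=u) (v:=v)) e; apply/phi_mt.
Qed.

Lemma ex_atom u v : exists a, is_atom A a /\ phi a u v.
Proof.
have L : forall l : seq T, exists m, phi m u v /\
    forall a, a \in l -> phi a u v -> le m a.
  elim=> [|a l [m [hm IH]]].
    exists o1; split=> //; by case: Hp => _ [_ [H1 _]]; apply/H1.
  case: (classic (phi a u v)) => ha.
    exists (mt m a); split; first by apply/phi_mt.
    move=> a'; rewrite in_cons => /orP [/eqP ->|hl] h; first exact: le_mtr.
    exact: le_trans (le_mtl _ _ _) (IH _ hl h).
  exists m; split=> // a'; rewrite in_cons => /orP [/eqP ->|hl] h //.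
  exact: IH.
have [m [hm H]] := L (enum T).
exists m; split=> //; split; first exact: phi_nz hm.
move=> b hb nb; case: (classic (phi b u v)) => h.
  by apply: le_anti hb (H _ (mem_enum _ _) h).
exfalso; apply: nb; apply: le_zero.
have h' : phi (ng b) u v by case: Hp => _ [_ [_ [_ [_ [Hng _]]]]]; apply/Hng.
rewrite -(cmpM A b); apply: le_mt; first exact: le_refl.
exact: le_trans hb (H _ (mem_enum _ _) h').
Qed.

End Fwd.

Definition pickp (T : Type) (D : Type) (phi : T -> D -> D -> Prop) (d0 : D) (t : T) : D * D :=
  match excluded_middle_informative (exists p : D * D, phi t p.1 p.2) with
  | left h => proj1_sig (constructive_indefinite_description _ h)
  | right _ => (d0, d0)
  end.

Lemma pickp_spec (T : Type) (D : Type) (phi : T -> D -> D -> Prop) (d0 : D) (t : T) :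
  (exists p : D * D, phi t p.1 p.2) -> phi t (pickp phi d0 t).1 (pickp phi d0 t).2.
Proof.
rewrite /pickp; case: (excluded_middle_informative _) => [h|n] H; last by [].
by case: (constructive_indefinite_description _ h).
Qed.

Theorem mainTheorem10 (T : finType) (A : naa T) :
  has_feeble_rep A <->
  exists (N : finType) (lam : N -> N -> T),
    consistent_network A lam /\ atomic_network A lam /\
    (forall a : T, is_atom A a -> exists x y : N, lam x y = a).
Proof.
split; last first.
  move=> [N [lam [Hc [Ha Hcov]]]].
  by exists (DD A lam); exists (@phiN T A N lam); exact: back_rep Hc Ha Hcov.
move=> [D [phi Hp]].
case: (classic (inhabited D)) => [[d0]|nD]; last first.
  exists ('I_0); exists (fun _ _ => Defs.zero A).
  split; first by move=> [].
  split; first by move=> [].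
  move=> a [nz _]; exfalso; apply: nz; case: Hp => Hinj _; apply: Hinj.
  by move=> u; exfalso; apply: nD; constructor.
pose pt (i : T * bool) := if i.2 then (pickp phi d0 i.1).2 else (pickp phi d0 i.1).1.
pose lam (i j : T * bool) := proj1_sig (constructive_indefinite_description _ (ex_atom Hp (pt i) (pt j))).
have lamP : forall i j, is_atom A (lam i j) /\ phi (lam i j) (pt i) (pt j).
  by move=> i j; rewrite /lam; case: (constructive_indefinite_description _ _).
clearbody lam.
have Hp' := Hp; case: Hp' => Hinj [H0 [H1 [Hid [Hpl [Hng [Hcv Hcomp]]]]]].
exists (T * bool)%type; exists lam.
split.
  move=> i j k; split.
    apply: (atom_common Hp (lamP i i).1 (lamP i i).2 _); exact/Hid.
  split.
    apply: (phi_nz Hp (u := pt i) (v := pt k)); apply/(phi_mt Hp); split.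
      by apply: Hcomp; exists (pt j); split; [exact: (lamP i j).2|exact: (lamP j k).2].
    exact: (lamP i k).2.
  split.
    apply: (phi_nz Hp (u := pt i) (v := pt j)); apply/(phi_mt Hp); split.
      exact: (lamP i j).2.
    by apply/Hcv; exact: (lamP j i).2.
  by case: (lamP i j) => [[]].
split; first by move=> i j; case: (lamP i j).
move=> a ha; exists (a, false); exists (a, true).
have ne : exists p : D * D, phi a p.1 p.2.
  apply: NNPP => H; case: ha => nz _; apply: nz; apply: Hinj => u v; split=> //.
    by move=> h; exfalso; apply: H; exists (u, v).
  by move/H0.
have hs := pickp_spec d0 ne.
case: (lamP (a, false) (a, true)) => hl pl.
apply: le_anti.
  exact: (atom_common Hp hl pl hs).
exact: (atom_common Hp ha hs pl).
Qed.
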